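(* Let $(X_i)_{i\in\mathbb N}$, $(X'_i)_{i\in\mathbb N}$ and $Y$ be mutually independent random variables with $(X_i)_{i\in\mathbb N}\sim(X'_i)_{i\in\mathbb N}$. Suppose that for some $k\in\mathbb N$ there exists $\lambda>0$ with \[\prod_{i=k}^\infty\mathbb E\Big[e^{\lambda(X'_i-X_i)}\Big]<\infty.\] Then \[\mathbb P\Big(\exists j\in\mathbb N:\ Y+\sum_{i=1}^{k+j}X_i\le\sum_{i=k}^{k+j}X'_i\Big)\le\Big(\prod_{i=k}^\infty\mathbb E\Big[e^{\lambda(X'_i-X_i)}\Big]\Big)\,\mathbb E\Big[e^{-\lambda\left(Y+\sum_{i=1}^{k-1}X_i\right)}\Big].\] *)

(* Defs.v *)
From HB Require Import structures.
From mathcomp Require Import all_boot all_order all_algebra.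
From mathcomp Require Import all_classical all_reals all_analysis.
Set Implicit Arguments. Unset Strict Implicit. Unset Printing Implicit Defensive.
Import Order.TTheory GRing.Theory Num.Theory.
Local Open Scope classical_set_scope.
Local Open Scope ring_scope.

Definition mutually_independent {d} {T : measurableType d} {R : realType}
  (P : probability T R) {I : eqType} (Z : I -> T -> R) : Prop :=
  forall (J : seq I) (B : I -> set R),
    uniq J -> (forall i, i \in J -> measurable (B i)) ->
    P (\bigcap_(i in [set i | i \in J]) (Z i @^-1` B i)) =
    (\prod_(i <- J) P (Z i @^-1` B i))%E.

(* Equality in law of two sequences of random variables (as random elements
   of R^N with the product sigma-algebra), i.e. equality of all
   finite-dimensional distributions (which determine the law). *)
Definition same_law_seq {d} {T : measurableType d} {R : realType}
  (P : probability T R) (X X' : nat -> T -> R) : Prop :=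
  forall (n : nat) (B : nat -> set R), (forall i, measurable (B i)) ->
    P (\bigcap_(i in `I_n) (X i @^-1` B i)) =
    P (\bigcap_(i in `I_n) (X' i @^-1` B i)).

Definition fam3 {T R : Type} (X X' : nat -> T -> R) (Y : T -> R)
  (i : (nat + nat + unit)%type) : T -> R :=
  match i with
  | inl (inl n) => X n
  | inl (inr n) => X' n
  | inr _ => Y
  end.

(* Main.v *)
Require Import Defs.
From HB Require Import structures.
From mathcomp Require Import all_boot all_order all_algebra.
From mathcomp Require Import all_classical all_reals all_analysis.
From mathcomp Require Import measurable_realfun.
From mathcomp Require Import ring lra zify.
Import Order.TTheory GRing.Theory Num.Theory.
Local Open Scope classical_set_scope.
Local Open Scope ring_scope.
Section prodlemma.
Local Open Scope ereal_scope.
Context d (T : measurableType d) (R : realType) (P : probability T R).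
Variables (G1 G2 : set (set T)).
Hypothesis G1m : G1 `<=` measurable.
Hypothesis G2m : G2 `<=` measurable.
Hypothesis indep : forall A B, <<s G1 >> A -> <<s G2 >> B -> P (A `&` B) = P A * P B.

Definition T1 := g_sigma_algebraType G1.
Definition T2 := g_sigma_algebraType G2.

Lemma sG1m : <<s G1 >> `<=` measurable.
Proof. apply: smallest_sub => //; exact: sigma_algebra_measurable. Qed.
Lemma sG2m : <<s G2 >> `<=` measurable.
Proof. apply: smallest_sub => //; exact: sigma_algebra_measurable. Qed.

Lemma mid1 : measurable_fun (setT : set T) (fun x : T => (x : T1)).
Proof. move=> _ B mB; rewrite setTI; exact: sG1m. Qed.
Lemma mid2 : measurable_fun (setT : set T) (fun x : T => (x : T2)).
Proof. move=> _ B mB; rewrite setTI; exact: sG2m. Qed.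

Definition id1 : {mfun T >-> T1} := HB.pack (fun x : T => (x : T1)) (isMeasurableFun.Build _ _ _ _ _ mid1).
Definition id2 : {mfun T >-> T2} := HB.pack (fun x : T => (x : T2)) (isMeasurableFun.Build _ _ _ _ _ mid2).

Definition mu1 := distribution P id1.
Definition mu2 := distribution P id2.

Definition phi (x : T) : (T1 * T2)%type := (x, x).
Lemma mphi : measurable_fun setT phi.
Proof. exact: measurable_fun_pair mid1 mid2. Qed.

Definition phim : {mfun T >-> (T1 * T2)%type} := HB.pack phi (isMeasurableFun.Build _ _ _ _ _ mphi).
Definition nu := distribution P phim.

Lemma pf_rect A B : measurable A -> measurable B ->
  nu (A `*` B) = mu1 A * mu2 B.
Proof.
move=> mA mB; rewrite /nu /mu1 /mu2 /distribution /pushforward /=.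
exact: indep.
Qed.

Lemma prod_formula (F G : T -> \bar R) :
  measurable_fun (setT : set T1) F -> (forall x, 0 <= F x) ->
  measurable_fun (setT : set T2) G -> (forall x, 0 <= G x) ->
  \int[P]_x (F x * G x) = \int[P]_x F x * \int[P]_x G x.
Proof.
move=> mF F0 mG G0.
pose f := fun z : (T1 * T2)%type => F z.1 * G z.2.
have mf : measurable_fun setT f.
  apply: emeasurable_funM.
  - exact: measurableT_comp mF measurable_fst.
  - exact: measurableT_comp mG measurable_snd.
have f0 : forall z, 0 <= f z by move=> z; rewrite mule_ge0.
have -> : \int[P]_x (F x * G x) = \int[P]_x (f \o phi) x by [].
rewrite -(@ge0_integral_distribution _ _ _ _ _ P phim f mf f0).
rewrite (eq_measure_integral (mu1 \x mu2)); last first.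
  move=> A mA _; symmetry.
  apply: (@product_measure_unique _ _ T1 T2 R mu1 mu2 nu _ A mA).
  move=> A1 A2 mA1 mA2; exact: pf_rect.
rewrite fubini_tonelli1 //.
rewrite /fubini_F /f /=.
under eq_integral do rewrite ge0_integralZl //.
rewrite ge0_integralZr //; last exact: integral_ge0.
rewrite ge0_integral_distribution // ge0_integral_distribution //.
Qed.
End prodlemma.
Section lambda.
Local Open Scope ereal_scope.
Context d (T : measurableType d) (R : realType) (P : probability T R).

Lemma lambda_indep (C : set T) : measurable C ->
  lambda_system setT [set A | measurable A /\ P (A `&` C) = P A * P C].
Proof.
move=> mC; split.
- by [].
- by split => //; rewrite setTI probability_setT mul1e.
- move=> A B BA [mA eA] [mB eB]; split; first exact: measurableD.
  have -> : (A `\` B) `&` C = (A `&` C) `\` (B `&` C).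
    apply/seteqP; split => x /=; first by move=> [[? ?] ?]; split => // -[].
    by move=> [[? ?] nb]; split => //; split => // bx; apply: nb.
  have fin X : measurable X -> P X \is a fin_num by move=> mX; exact: fin_num_measure.
  have ltX X : measurable X -> P X < +oo by move=> mX; rewrite ltey_eq fin.
  rewrite measureD; [|exact: measurableI|exact: measurableI|exact/ltX/measurableI].
  have -> : (A `&` C) `&` (B `&` C) = B `&` C.
    apply/seteqP; split => x /=; first by move=> [[? ?] [? ?]].
    by move=> [bx cx]; split => //; split => //; apply: BA.
  rewrite measureD; [|done|done|exact/ltX].
  have -> : A `&` B = B by apply/seteqP; split => x /=; [move=> [] | move=> bx; split => //; apply: BA].
  transitivity (P A * P C - P B * P C); first by congr (_ - _); [exact: eA | exact: eB].
  rewrite muleBl //; first exact: fin.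
  by apply: fin_num_adde_defr; exact: fin.
- move=> F ndF HF; split.
    by apply: bigcup_measurable => k _; case: (HF k).
  have mF k : measurable (F k) by case: (HF k).
  have h1 := @nondecreasing_cvg_mu _ _ _ P _ mF (bigcup_measurable (fun k _ => mF k)) ndF.
  have mFC k : measurable (F k `&` C) by exact: measurableI.
  have ndFC : {homo (fun k => F k `&` C) : n m / (n <= m)%N >-> (n <= m)%O}.
    move=> n m nm; apply/subsetPset => x [Fx Cx]; split => //.
    by move/subsetPset: (ndF n m nm); apply.
  have h2 := @nondecreasing_cvg_mu _ _ _ P _ mFC (bigcup_measurable (fun k _ => mFC k)) ndFC.
  rewrite setI_bigcupl.
  have h3 := cvgeZr (fin_num_measure P C mC) h1.
  have e : P \o (fun k => F k `&` C) = (fun n => P (F n) * P C).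
    by apply/funext => n /=; case: (HF n).
  rewrite e in h2.
  exact: (cvg_unique (@ereal_hausdorff R) h2 h3).
Qed.
End lambda.

Section indep.
Local Open Scope ereal_scope.
Context d (T : measurableType d) (R : realType) (P : probability T R)
  (I : eqType) (Z : I -> T -> R).
Hypothesis mZ : forall i, measurable_fun setT (Z i).
Hypothesis indep : mutually_independent P Z.

Definition GJ (J : seq I) : set (set T) :=
  [set A | exists B : I -> set R, (forall i, measurable (B i)) /\
     A = \bigcap_(i in [set i | i \in J]) Z i @^-1` B i].

Lemma bigcap_cons (F : I -> set T) a J :
  \bigcap_(i in [set i | i \in a :: J]) F i = F a `&` \bigcap_(i in [set i | i \in J]) F i.
Proof.
apply/seteqP; split => t.
- move=> H; split; first by apply: H; rewrite /= mem_head.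
  by move=> i iJ; apply: H; rewrite /= in_cons iJ orbT.
- move=> [Fa H] i; rewrite /= in_cons => /orP [/eqP -> // | iJ]; exact: H.
Qed.

Lemma bigcap_nil (F : I -> set T) :
  \bigcap_(i in [set i | i \in [::]]) F i = setT.
Proof. by apply/seteqP; split => t // _ i. Qed.

Lemma GJ_meas J : GJ J `<=` measurable.
Proof.
move=> A [B [mB ->]]; elim: J => [|a J IH]; first by rewrite bigcap_nil.
rewrite bigcap_cons; apply: measurableI => //.
by rewrite -(setTI (_ @^-1` _)); apply: mZ.
Qed.

Lemma GJ_setI J : setI_closed (GJ J).
Proof.
move=> A1 A2 [B1 [mB1 ->]] [B2 [mB2 ->]].
exists (fun i => B1 i `&` B2 i); split; first by move=> i; exact: measurableI.
apply/seteqP; split => t /=.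
- by move=> [H1 H2] i iJ; split; [apply: H1 | apply: H2].
- by move=> H; split => i iJ; case: (H i iJ).
Qed.

Lemma indep_GJ J1 J2 A B : uniq (J1 ++ J2) -> GJ J1 A -> GJ J2 B ->
  P (A `&` B) = P A * P B.
Proof.
move=> u [B1 [mB1 ->]] [B2 [mB2 ->]].
move: (u); rewrite cat_uniq => /and3P [u1 nh u2].
pose C i := if i \in J1 then B1 i else B2 i.
have mC i : measurable (C i) by rewrite /C; case: ifP.
have -> : (\bigcap_(i in [set i | i \in J1]) Z i @^-1` B1 i) `&`
          (\bigcap_(i in [set i | i \in J2]) Z i @^-1` B2 i) =
          \bigcap_(i in [set i | i \in J1 ++ J2]) Z i @^-1` C i.
  apply/seteqP; split => t /=.
  - move=> [H1 H2] i /=; rewrite mem_cat /C => /orP [iJ1 | iJ2].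
      by rewrite iJ1; apply: H1.
    case: ifP => [iJ1|_]; last exact: H2.
    by exfalso; move/hasP: nh; apply; exists i.
  - move=> H; split => i /= iJ.
      by have := H i; rewrite /C /= mem_cat iJ /=; apply.
    have := H i; rewrite /C /= mem_cat iJ orbT.
    case: ifP => [iJ1|_]; last by apply.
    by exfalso; move/hasP: nh; apply; exists i.
rewrite indep // ?big_cat //= indep // indep //.
congr (_ * _); apply: eq_big_seq => i iJ; rewrite /C.
  by rewrite iJ.
case: ifP => // iJ1; exfalso; move/hasP: nh; apply; exists i => //.
Qed.

Lemma sGJ_meas J : <<s GJ J >> `<=` measurable.
Proof. apply: smallest_sub; [exact: sigma_algebra_measurable | exact: GJ_meas]. Qed.

Lemma indep_sGJ J1 J2 A B : uniq (J1 ++ J2) -> <<s GJ J1 >> A -> <<s GJ J2 >> B ->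
  P (A `&` B) = P A * P B.
Proof.
move=> u sA sB.
have step1 : forall B', GJ J2 B' -> P (A `&` B') = P A * P B'.
  move=> B' GB'.
  suff : <<s GJ J1 >> `<=` [set A | measurable A /\ P (A `&` B') = P A * P B'].
    by move=> /(_ _ sA) [].
  apply: lambda_system_subset => //.
  - exact: GJ_setI.
  - exact: lambda_indep (@GJ_meas J2 _ GB').
  - move=> A' GA'; split; first exact: (@GJ_meas J1).
    exact: indep_GJ u GA' GB'.
suff : <<s GJ J2 >> `<=` [set B' | measurable B' /\ P (B' `&` A) = P B' * P A].
  by move=> /(_ _ sB) [_]; rewrite setIC muleC.
apply: lambda_system_subset => //.
- exact: GJ_setI.
- exact: lambda_indep (@sGJ_meas J1 _ sA).
- move=> B' GB'; split; first exact: (@GJ_meas J2).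
  by rewrite setIC muleC; apply: step1.
Qed.

End indep.
Arguments GJ {d T R I} Z J _.
Arguments sGJ_meas {d T R I Z} mZ {J}.
Arguments GJ_meas {d T R I Z} mZ {J}.
Arguments indep_sGJ {d T R P I Z} mZ indep {J1 J2 A B}.

Section helpers.
Context d (T : measurableType d) (R : realType) (I : eqType) (Z : I -> T -> R).
Hypothesis mZ : forall i, measurable_fun setT (Z i).

Lemma TJ_to_T J (f : T -> R) :
  measurable_fun (setT : set (g_sigma_algebraType (GJ Z J))) f ->
  measurable_fun (setT : set T) f.
Proof.
move=> mf _ U mU; have := mf measurableT U mU.
by rewrite !setTI => /(sGJ_meas mZ).
Qed.

Lemma TJ_to_Te J (f : T -> \bar R) :
  measurable_fun (setT : set (g_sigma_algebraType (GJ Z J))) f ->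
  measurable_fun (setT : set T) f.
Proof.
move=> mf _ U mU; have := mf measurableT U mU.
by rewrite !setTI => /(sGJ_meas mZ).
Qed.

Lemma mZJ J i : i \in J ->
  measurable_fun (setT : set (g_sigma_algebraType (GJ Z J))) (Z i).
Proof.
move=> iJ _ U mU; rewrite setTI; apply: sub_sigma_algebra.
exists (fun j => if j == i then U else setT); split.
  by move=> j; case: ifP.
apply/seteqP; split => t /=.
- by move=> Ut j jJ; case: eqP => [->|].
- by move=> H; have := H i iJ; rewrite eqxx.
Qed.
End helpers.

Section mhelpers.
Context d (T : measurableType d) (R : realType).

Lemma msum_in (s : seq nat) (h : nat -> T -> R) :
  (forall i, i \in s -> measurable_fun setT (h i)) ->
  measurable_fun setT (fun x => \sum_(i <- s) h i x).
Proof.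
elim: s => [|a s IH] H.
  by under eq_fun do rewrite big_nil; exact: measurable_cst.
under eq_fun do rewrite big_cons.
apply: measurable_funD; first by apply: H; rewrite mem_head.
by apply: IH => i iS; apply: H; rewrite in_cons iS orbT.
Qed.

Lemma morb (f g : T -> bool) : measurable_fun setT f -> measurable_fun setT g ->
  measurable_fun setT (fun x => f x || g x).
Proof.
move=> mf mg.
have -> : (fun x => f x || g x) = (fun x => if f x then true else g x).
  by apply/funext => x; case: (f x).
apply: measurable_fun_ifT => //; exact: measurable_cst.
Qed.
End mhelpers.

Section main.
Variables (R : realType) (d : measure_display) (T : measurableType d)
  (P : probability T R) (X X' : nat -> T -> R) (Y : T -> R).
Hypotheses (mX : forall i, measurable_fun setT (X i))
  (mX' : forall i, measurable_fun setT (X' i)) (mY : measurable_fun setT Y)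
  (indep : mutually_independent P (fam3 X X' Y)) (law : same_law_seq P X X').
Variables (k : nat) (lambda : R).
Hypotheses (k_ge1 : (1 <= k)%N) (lambda_gt0 : 0 < lambda).

Definition Z := fam3 X X' Y.
Lemma mZ : forall i, measurable_fun setT (Z i).
Proof. by case => [[n|n]|[]] /=. Qed.

Definition ix n : (nat + nat + unit)%type := inl (inl n).
Definition ix' n : (nat + nat + unit)%type := inl (inr n).
Definition iy : (nat + nat + unit)%type := inr tt.

Definition Jm m := iy :: [seq ix i | i <- iota 0 m] ++ [seq ix' i | i <- iota 0 m].
Definition Km m := [:: ix m; ix' m].

Lemma memJ m x : x \in Jm m ->
  x = iy \/ (exists2 i, (i < m)%N & x = ix i) \/ (exists2 i, (i < m)%N & x = ix' i).
Proof.
rewrite /Jm in_cons mem_cat => /orP [/eqP -> | /orP [/mapP [i + ->] | /mapP [i + ->]]].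
- by left.
- by rewrite mem_iota add0n => im; right; left; exists i.
- by rewrite mem_iota add0n => im; right; right; exists i.
Qed.

Lemma uJK m : uniq (Jm m ++ Km m).
Proof.
rewrite cat_uniq; apply/and3P; split.
- rewrite /Jm cons_uniq mem_cat negb_or; apply/andP; split.
    by apply/andP; split; apply/negP => /mapP [i _].
  rewrite cat_uniq; apply/and3P; split.
  + by rewrite map_inj_uniq ?iota_uniq // => a b [].
  + by apply/hasPn => x /mapP [i _ ->]; apply/negP => /mapP [j _].
  + by rewrite map_inj_uniq ?iota_uniq // => a b [].
- rewrite /Km /= orbF negb_or; apply/andP; split; apply/negP => /memJ.
  + by move=> [//|[[i im [e]]|[i _ //]]]; move: im; rewrite e ltnn.
  + by move=> [//|[[i _ //]|[i im [e]]]]; move: im; rewrite e ltnn.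
- by [].
Qed.

Notation TJ m := (g_sigma_algebraType (GJ Z (Jm m))).
Notation TK m := (g_sigma_algebraType (GJ Z (Km m))).

Lemma mXJ m i : (i < m)%N -> measurable_fun (setT : set (TJ m)) (X i).
Proof.
move=> im; have H : ix i \in Jm m.
  by rewrite /Jm in_cons mem_cat map_f // mem_iota.
exact: (@mZJ _ _ _ _ Z (Jm m) (ix i) H).
Qed.

Lemma mX'J m i : (i < m)%N -> measurable_fun (setT : set (TJ m)) (X' i).
Proof.
move=> im; have H : ix' i \in Jm m.
  by rewrite /Jm in_cons mem_cat; apply/orP; right; apply/orP; right; rewrite map_f // mem_iota.
exact: (@mZJ _ _ _ _ Z (Jm m) (ix' i) H).
Qed.

Lemma mYJ m : measurable_fun (setT : set (TJ m)) Y.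
Proof.
have H : iy \in Jm m by rewrite /Jm mem_head.
exact: (@mZJ _ _ _ _ Z (Jm m) iy H).
Qed.

Lemma mXK m : measurable_fun (setT : set (TK m)) (X m).
Proof.
have H : ix m \in Km m by rewrite /Km mem_head.
exact: (@mZJ _ _ _ _ Z (Km m) (ix m) H).
Qed.

Lemma mX'K m : measurable_fun (setT : set (TK m)) (X' m).
Proof.
have H : ix' m \in Km m by rewrite /Km !inE eqxx orbT.
exact: (@mZJ _ _ _ _ Z (Km m) (ix' m) H).
Qed.

Definition W x := Y x + \sum_(1 <= i < k) X i x.
Definition Dsum n x := \sum_(k <= i < (k + n).+1) (X' i x - X i x).
Fixpoint hit n x : bool :=
  if n is n'.+1 then hit n' x || (W x <= Dsum n x) else (W x <= Dsum 0 x).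
Fixpoint Q n x : R :=
  if n is n'.+1 then (if hit n' x then Q n' x else expR (lambda * (Dsum n x - W x)))
  else expR (lambda * (Dsum 0 x - W x)).

Lemma mWJ m : (k <= m)%N -> measurable_fun (setT : set (TJ m)) W.
Proof.
move=> km; apply: measurable_funD; first exact: mYJ.
apply: msum_in => i; rewrite mem_index_iota => /andP [_ ik].
by apply: mXJ; apply: leq_trans km.
Qed.

Lemma mDJ n m : (k + n < m)%N -> measurable_fun (setT : set (TJ m)) (Dsum n).
Proof.
move=> km; apply: msum_in => i; rewrite mem_index_iota => /andP [_ ik].
have im : (i < m)%N by apply: leq_trans km.
by apply: measurable_funB; [apply: mX'J | apply: mXJ].
Qed.

Lemma mhitJ n m : (k + n < m)%N -> measurable_fun (setT : set (TJ m)) (hit n).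
Proof.
elim: n => [|n IH] km /=.
  apply: measurable_fun_ler; [apply: mWJ | apply: mDJ] => //.
  by apply: ltnW; rewrite addn0 in km.
apply: morb; first by apply: IH; apply: leq_trans km; rewrite ltnS addnS.
apply: measurable_fun_ler; [apply: mWJ | apply: mDJ] => //.
by apply: leq_trans (leq_addr n.+1 k) (ltnW km).
Qed.

Lemma mexpJ n m : (k + n < m)%N ->
  measurable_fun (setT : set (TJ m)) (fun x => expR (lambda * (Dsum n x - W x))).
Proof.
move=> km; apply: measurableT_comp; first exact: measurable_expR.
apply: measurable_funM; first exact: measurable_cst.
apply: measurable_funB; first exact: mDJ.
by apply: mWJ; apply: leq_trans (leq_addr n k) (ltnW km).
Qed.

Lemma mQJ n m : (k + n < m)%N -> measurable_fun (setT : set (TJ m)) (Q n).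
Proof.
elim: n => [|n IH] km /=; first exact: mexpJ.
apply: measurable_fun_ifT.
- by apply: mhitJ; apply: leq_trans km; rewrite ltnS addnS.
- by apply: IH; apply: leq_trans km; rewrite ltnS addnS.
- exact: mexpJ.
Qed.

Lemma expR_ge1' (t : R) : 0 <= t -> 1 <= expR t.
Proof. move=> t0; apply: le_trans (expR_ge1Dx t); lra. Qed.

Lemma Q_nhit n x : ~~ hit n x -> Q n x = expR (lambda * (Dsum n x - W x)).
Proof.
case: n => [//|n] /=; rewrite negb_or => /andP [nh _].
by rewrite (negbTE nh).
Qed.

Lemma Q_hit n x : hit n x -> 1 <= Q n x.
Proof.
elim: n => [|n IH] /=.
  by move=> h; apply: expR_ge1'; apply: mulr_ge0; [exact: ltW | rewrite subr_ge0].
case: (boolP (hit n x)) => [h _|nh /= h]; first exact: IH.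
by apply: expR_ge1'; apply: mulr_ge0; [exact: ltW | rewrite subr_ge0].
Qed.

Lemma Q_ge0 n x : 0 <= Q n x.
Proof. elim: n => [|n IH] /=; first exact: expR_ge0. by case: ifP. Qed.

Lemma DsumS n x : Dsum n.+1 x = Dsum n x + (X' (k + n.+1) x - X (k + n.+1) x).
Proof.
rewrite /Dsum addnS big_nat_recr //=.
by lia.
Qed.

Lemma Dsum0 x : Dsum 0 x = X' k x - X k x.
Proof. by rewrite /Dsum addn0 big_nat1. Qed.

Definition e m x := expR (lambda * (X' m x - X m x)).
Definition Af n x := if hit n x then Q n x else 0.
Definition Bf n x := if hit n x then 0 else Q n x.

Lemma QAB n x : Q n x = Af n x + Bf n x.
Proof. by rewrite /Af /Bf; case: ifP; rewrite ?addr0 ?add0r. Qed.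

Lemma QS n x : Q n.+1 x = Af n x + Bf n x * e (k + n.+1) x.
Proof.
rewrite /Af /Bf /=; case: (boolP (hit n x)) => h.
  by rewrite mul0r addr0.
rewrite add0r Q_nhit // /e -expRD DsumS; congr expR; lra.
Qed.

Lemma Q0E x : Q 0 x = expR (- (lambda * W x)) * e k x.
Proof. by rewrite /= /e -expRD Dsum0; congr expR; lra. Qed.

Lemma event_iff j x :
  (Y x + \sum_(1 <= i < (k + j).+1) X i x <= \sum_(k <= i < (k + j).+1) X' i x)
  = (W x <= Dsum j x).
Proof.
have -> : \sum_(1 <= i < (k + j).+1) X i x =
    \sum_(1 <= i < k) X i x + \sum_(k <= i < (k + j).+1) X i x.
  by rewrite (@big_cat_nat _ _ _ k 1 (k + j).+1) //; lia.
rewrite /W /Dsum sumrB.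
set a := \sum_(1 <= i < k) X i x.
set b := \sum_(k <= i < (k + j).+1) X i x.
set c := \sum_(k <= i < (k + j).+1) X' i x.
apply/idP/idP => H; lra.
Qed.

Lemma hitP n x : hit n x = [exists j : 'I_n.+1, W x <= Dsum j x].
Proof.
elim: n => [|n IH] /=.
  apply/idP/existsP => [h|[j]]; first by exists ord0.
  by rewrite (ord1 j).
rewrite IH; apply/idP/existsP.
- move=> /orP [/existsP [j hj]|h].
    by exists (widen_ord (leqnSn _) j).
  by exists ord_max.
- move=> [j hj]; case: (ltnP j n.+1) => jn.
    by apply/orP; left; apply/existsP; exists (Ordinal jn).
  have ej : (j : nat) = n.+1 by apply/anti_leq; rewrite jn -ltnS ltn_ord.
  by move: hj; rewrite ej => ->; rewrite orbT.
Qed.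

Lemma mAJ n : measurable_fun (setT : set (TJ (k + n.+1))) (Af n).
Proof.
have h : (k + n < k + n.+1)%N by lia.
apply: measurable_fun_ifT; [exact: mhitJ | exact: mQJ | exact: measurable_cst].
Qed.

Lemma mBJ n : measurable_fun (setT : set (TJ (k + n.+1))) (Bf n).
Proof.
have h : (k + n < k + n.+1)%N by lia.
apply: measurable_fun_ifT; [exact: mhitJ | exact: measurable_cst | exact: mQJ].
Qed.

Lemma meK m : measurable_fun (setT : set (TK m)) (e m).
Proof.
apply: measurableT_comp; first exact: measurable_expR.
apply: measurable_funM; first exact: measurable_cst.
apply: measurable_funB; [exact: mX'K | exact: mXK].
Qed.

Lemma mexpW : measurable_fun (setT : set (TJ k)) (fun x => expR (- (lambda * W x))).
Proof.
have -> : (fun x => expR (- (lambda * W x))) = (fun x => expR ((- lambda) * W x)).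
  by apply/funext => x; rewrite mulNr.
apply: measurableT_comp; first exact: measurable_expR.
apply: measurable_funM; first exact: measurable_cst.
exact: mWJ.
Qed.

Lemma prodJK m (f g : T -> R) :
  measurable_fun (setT : set (TJ m)) f -> (forall x, 0 <= f x) ->
  measurable_fun (setT : set (TK m)) g -> (forall x, 0 <= g x) ->
  (\int[P]_x ((f x)%:E * (g x)%:E) = \int[P]_x (f x)%:E * \int[P]_x (g x)%:E)%E.
Proof.
move=> mf f0 mg g0.
have := @prod_formula _ _ _ P (GJ Z (Jm m)) (GJ Z (Km m)) (GJ_meas mZ) (GJ_meas mZ)
  (fun A B hA hB => indep_sGJ mZ indep (uJK m) hA hB) (EFin \o f) (EFin \o g).
apply.
- exact/measurable_EFinP.
- by move=> x /=; rewrite lee_fin.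
- exact/measurable_EFinP.
- by move=> x /=; rewrite lee_fin.
Qed.

Lemma prodgen J1 J2 (f g : T -> R) : uniq (J1 ++ J2) ->
  measurable_fun (setT : set (g_sigma_algebraType (GJ Z J1))) f -> (forall x, 0 <= f x) ->
  measurable_fun (setT : set (g_sigma_algebraType (GJ Z J2))) g -> (forall x, 0 <= g x) ->
  (\int[P]_x ((f x)%:E * (g x)%:E) = \int[P]_x (f x)%:E * \int[P]_x (g x)%:E)%E.
Proof.
move=> u mf f0 mg g0.
have := @prod_formula _ _ _ P (GJ Z J1) (GJ Z J2) (GJ_meas mZ) (GJ_meas mZ)
  (fun A B hA hB => indep_sGJ mZ indep u hA hB) (EFin \o f) (EFin \o g).
apply.
- exact/measurable_EFinP.
- by move=> x /=; rewrite lee_fin.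
- exact/measurable_EFinP.
- by move=> x /=; rewrite lee_fin.
Qed.

Definition M i := (\int[P]_x (expR (lambda * (X' i x - X i x)))%:E)%E.
Definition EW := (\int[P]_x (expR (- (lambda * W x)))%:E)%E.

Lemma law1 i B : measurable B -> P (X i @^-1` B) = P (X' i @^-1` B).
Proof.
move=> mB.
have mB' : forall j, measurable ((fun j => if j == i then B else setT) j).
  by move=> j; case: ifP.
have := law i.+1 _ mB'.
have E (V : nat -> T -> R) : \bigcap_(j in `I_i.+1) V j @^-1` (if j == i then B else setT)
   = V i @^-1` B.
  apply/seteqP; split => t /=.
  - by move=> H; have := H i (ltnSn i); rewrite eqxx.
  - by move=> Bt j _; case: eqP => [->|].
by rewrite !E.
Qed.

Lemma Eexp i (c : R) :
  (\int[P]_x (expR (c * X i x))%:E = \int[P]_x (expR (c * X' i x))%:E)%E.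
Proof.
pose Xm : {mfun T >-> R} := HB.pack (X i) (isMeasurableFun.Build _ _ _ _ _ (mX i)).
pose X'm : {mfun T >-> R} := HB.pack (X' i) (isMeasurableFun.Build _ _ _ _ _ (mX' i)).
pose f := fun r : R => (expR (c * r))%:E.
have mf : measurable_fun setT f.
  apply/measurable_EFinP; apply: measurableT_comp; first exact: measurable_expR.
  by apply: measurable_funM; [exact: measurable_cst | exact: measurable_id].
have f0 : forall r, (0 <= f r)%E by move=> r; rewrite lee_fin expR_ge0.
have h1 := @ge0_integral_distribution _ _ _ _ _ P Xm f mf f0.
have h2 := @ge0_integral_distribution _ _ _ _ _ P X'm f mf f0.
transitivity (\int[P]_x (f \o Xm) x)%E; first by [].
rewrite -h1.
transitivity (\int[P]_x (f \o X'm) x)%E; last by [].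
rewrite -h2.
apply: eq_measure_integral => A mA _.
exact: law1.
Qed.

Lemma mexpc J i (c : R) (V : nat -> T -> R) :
  measurable_fun (setT : set (g_sigma_algebraType (GJ Z J))) (V i) ->
  measurable_fun (setT : set (g_sigma_algebraType (GJ Z J))) (fun x => expR (c * V i x)).
Proof.
move=> mV; apply: measurableT_comp; first exact: measurable_expR.
by apply: measurable_funM; [exact: measurable_cst | exact: mV].
Qed.

Lemma Mge1 i : (1 <= M i)%E.
Proof.
have u1 : uniq ([:: ix' i] ++ [:: ix i]) by [].
have u2 : uniq ([:: ix i] ++ [:: ix' i]) by [].
have mXs := @mZJ _ _ _ _ Z [:: ix i] (ix i) (mem_head _ _).
have mX's := @mZJ _ _ _ _ Z [:: ix' i] (ix' i) (mem_head _ _).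
have h1 := prodgen _ _ _ _ u1 (@mexpc _ i lambda X' mX's) (fun x => expR_ge0 _)
                      (@mexpc _ i (- lambda) X mXs) (fun x => expR_ge0 _).
have h2 := prodgen _ _ _ _ u2 (@mexpc _ i lambda X mXs) (fun x => expR_ge0 _)
                      (@mexpc _ i (- lambda) X' mX's) (fun x => expR_ge0 _).
set M' := (\int[P]_x (expR (lambda * (X i x - X' i x)))%:E)%E.
have eM : M i = (\int[P]_x (expR (lambda * X' i x))%:E * \int[P]_x (expR (- lambda * X i x))%:E)%E.
  rewrite -h1 /M; apply: eq_integral => x _.
  by rewrite -EFinM -expRD; congr (expR _)%:E; ring.
have eM' : M' = (\int[P]_x (expR (lambda * X i x))%:E * \int[P]_x (expR (- lambda * X' i x))%:E)%E.
  rewrite -h2 /M'; apply: eq_integral => x _.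
  by rewrite -EFinM -expRD; congr (expR _)%:E; ring.
have eMM : M' = M i by rewrite eM eM' (Eexp i lambda) (Eexp i (- lambda)).
have mT1 : measurable_fun setT (fun x => (expR (lambda * (X' i x - X i x)))%:E).
  apply/measurable_EFinP; apply: measurableT_comp; first exact: measurable_expR.
  apply: measurable_funM; first exact: measurable_cst.
  exact: measurable_funB.
have mT2 : measurable_fun setT (fun x => (expR (lambda * (X i x - X' i x)))%:E).
  apply/measurable_EFinP; apply: measurableT_comp; first exact: measurable_expR.
  apply: measurable_funM; first exact: measurable_cst.
  exact: measurable_funB.
have h2M : (2%:E <= M i + M')%E.
  rewrite /M /M' -ge0_integralD //; try by move=> x _; rewrite lee_fin expR_ge0.
  apply: (@le_trans _ _ (\int[P]_x (cst 2%:E) x)%E).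
    rewrite integral_cst //; have PT : ((P : measure T R) setT = 1)%E by exact: probability_setT.
    by rewrite PT mule1.
  apply: ge0_le_integral => //;
    try (by move=> x _; rewrite lee_fin);
    try (by apply: emeasurable_funD; [exact: mT1 | exact: mT2]).
    move=> x _ /=; rewrite -EFinD lee_fin.
    set t := lambda * (X' i x - X i x).
    have -> : lambda * (X i x - X' i x) = - t by rewrite /t; ring.
    have := expR_ge1Dx t; have := expR_ge1Dx (- t); lra.
rewrite eMM in h2M.
have M0 : (0 <= M i)%E by apply: integral_ge0 => x _; rewrite lee_fin expR_ge0.
move: h2M M0; case: (M i) => [r||] //=.
rewrite -EFinD !lee_fin => h _; lra.
by move=> _ _; rewrite leey.
Qed.

Lemma M_ge0 i : (0 <= M i)%E.
Proof. by apply: integral_ge0 => x _; rewrite lee_fin expR_ge0. Qed.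

Lemma EW_ge0 : (0 <= EW)%E.
Proof. by apply: integral_ge0 => x _; rewrite lee_fin expR_ge0. Qed.

Lemma toT m (f : T -> R) : measurable_fun (setT : set (TJ m)) f ->
  measurable_fun setT (fun x => (f x)%:E).
Proof. by move=> mf; apply/measurable_EFinP; exact: (@TJ_to_T _ _ _ _ Z mZ _ _ mf). Qed.

Lemma boundQ n : (\int[P]_x (Q n x)%:E <= (\prod_(k <= i < (k + n).+1) M i) * EW)%E.
Proof.
elim: n => [|n IH].
  have h := prodJK k (fun x => expR (- (lambda * W x))) (e k) mexpW (fun x => expR_ge0 _)
     (meK k) (fun x => expR_ge0 _).
  rewrite addn0 big_nat1.
  under eq_integral do rewrite Q0E EFinM.
  by rewrite h muleC.
have A0 x : 0 <= Af n x by rewrite /Af; case: ifP => // _; exact: Q_ge0.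
have B0 x : 0 <= Bf n x by rewrite /Bf; case: ifP => // _; exact: Q_ge0.
have mAT := @toT _ _ (mAJ n).
have mBT := @toT _ _ (mBJ n).
have meT : measurable_fun setT (fun x => (e (k + n.+1) x)%:E).
  apply/measurable_EFinP; apply: measurableT_comp; first exact: measurable_expR.
  apply: measurable_funM; first exact: measurable_cst.
  exact: measurable_funB.
have e1 : (\int[P]_x (Q n.+1 x)%:E =
    \int[P]_x (Af n x)%:E + \int[P]_x (Bf n x)%:E * M (k + n.+1))%E.
  under eq_integral do rewrite QS EFinD EFinM.
  rewrite ge0_integralD //.
  - by rewrite (prodJK (k + n.+1) _ _ (mBJ n) B0 (meK _) (fun x => expR_ge0 _)).
  - by move=> x _; rewrite lee_fin.
  - by move=> x _; rewrite mule_ge0 // lee_fin ?expR_ge0.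
  - exact: emeasurable_funM.
have e2 : (\int[P]_x (Q n x)%:E = \int[P]_x (Af n x)%:E + \int[P]_x (Bf n x)%:E)%E.
  under eq_integral do rewrite QAB EFinD.
  rewrite ge0_integralD //.
  - by move=> x _; rewrite lee_fin.
  - by move=> x _; rewrite lee_fin.
have IA : (0 <= \int[P]_x (Af n x)%:E)%E by apply: integral_ge0 => x _; rewrite lee_fin.
have IB : (0 <= \int[P]_x (Bf n x)%:E)%E by apply: integral_ge0 => x _; rewrite lee_fin.
have -> : (\prod_(k <= i < (k + n.+1).+1) M i =
    (\prod_(k <= i < (k + n).+1) M i) * M (k + n).+1)%E.
  by rewrite addnS big_nat_recr //; lia.
rewrite e1 addnS.
apply: (@le_trans _ _ (M (k + n).+1 * (\int[P]_x (Af n x)%:E + \int[P]_x (Bf n x)%:E))%E).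
  rewrite (ge0_muleDr (M (k + n).+1) IA IB); apply: leeD.
    exact: lee_pemull (Mge1 _).
  by rewrite muleC.
rewrite -e2 (muleC (\prod_(k <= i < (k + n).+1) M i)) -muleA.
by apply: lee_wpmul2l; [exact: M_ge0 | exact: IH].
Qed.

Lemma mhitT n : measurable [set x | hit n x].
Proof.
have kn : (k + n < k + n.+1)%N by lia.
have := @mhitJ n (k + n.+1) kn measurableT [set true] I.
rewrite setTI => /(sGJ_meas mZ).
have -> : hit n @^-1` [set true] = [set x | hit n x] by apply/seteqP; split => x /=.
by [].
Qed.

Lemma Phit n : (P [set x | hit n x] <= \int[P]_x (Q n x)%:E)%E.
Proof.
have h : (P [set x | hit n x] = \int[P]_x (\1_[set x | hit n x] x)%:E)%E.
  by rewrite integral_indic ?setIT //; exact: mhitT.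
rewrite h.
have kn : (k + n < k + n.+1)%N by lia.
apply: ge0_le_integral => //;
  try (by move=> x _; rewrite lee_fin);
  try (by apply/measurable_EFinP; exact: measurable_indic (mhitT n));
  try (by exact: (@toT _ _ (@mQJ n _ kn))).
  move=> x _; rewrite indicE; case: (boolP (hit n x)) => hx.
    by rewrite mem_set //= lee_fin; exact: Q_hit.
  rewrite memNset /=; first by rewrite lee_fin Q_ge0.
  by apply/negP.
Qed.

Lemma prod_ge1 (a b : nat) : (1 <= \prod_(a <= i < b) M i)%E.
Proof.
elim/big_ind: _ => //.
- move=> x y hx hy; have := lee_pmul lee01 lee01 hx hy; by rewrite mul1e.
- move=> i _; exact: Mge1.
Qed.

Lemma prod_le_p (p : R) :
  (fun n : nat => (\prod_(k <= i < n)
        \int[P]_x (expR (lambda * (X' i x - X i x)))%:E)%E) @ \oo --> p%:E ->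
  forall n, (\prod_(k <= i < (k + n).+1) M i <= p%:E)%E.
Proof.
move=> pf n.
rewrite -(cvg_lim (@ereal_hausdorff R) pf).
apply: lime_ge; first exact: cvgP pf.
exists (k + n).+1 => // N /= hN.
rewrite (@big_cat_nat _ _ _ (k + n).+1 k N) //=; last by lia.
apply: lee_pemulr; last exact: prod_ge1.
apply: le_trans lee01 _; exact: prod_ge1.
Qed.

Lemma hit_mono : {homo (fun n => [set x | hit n x]) : n m / (n <= m)%N >-> (n <= m)%O}.
Proof.
move=> n m nm; apply/subsetPset => x /=; rewrite !hitP => /existsP [j hj].
have nm1 : (n.+1 <= m.+1)%N by rewrite ltnS.
apply/existsP; exists (widen_ord nm1 j) => //.
Qed.

Lemma event_eq :
  [set x | exists j : nat,
      Y x + \sum_(1 <= i < (k + j).+1) X i x <= \sum_(k <= i < (k + j).+1) X' i x]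
  = \bigcup_n [set x | hit n x].
Proof.
apply/seteqP; split => x /=.
- move=> [j hj]; exists j => //=; rewrite hitP; apply/existsP.
  by exists ord_max; rewrite -event_iff.
- move=> [n _ /=]; rewrite hitP => /existsP [j hj].
  by exists j; rewrite event_iff.
Qed.

Lemma final (p : R) :
  (fun n : nat => (\prod_(k <= i < n)
        \int[P]_x (expR (lambda * (X' i x - X i x)))%:E)%E) @ \oo --> p%:E ->
  (P [set x | exists j : nat,
      (Y x + \sum_(1 <= i < (k + j).+1) X i x <= \sum_(k <= i < (k + j).+1) X' i x)%R]
   <= p%:E * EW)%E.
Proof.
move=> pf; rewrite event_eq.
have mU : measurable (\bigcup_n [set x | hit n x]).
  by apply: bigcup_measurable => n _; exact: mhitT.
have cv := @nondecreasing_cvg_mu _ _ _ P _ mhitT mU hit_mono.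
rewrite -(cvg_lim (@ereal_hausdorff R) cv).
apply: lime_le; first exact: cvgP cv.
apply: nearW => n /=.
apply: le_trans (Phit n) _.
apply: le_trans (boundQ n) _.
apply: lee_wpmul2r; first exact: EW_ge0.
exact: prod_le_p.
Qed.

End main.

Theorem lemma3p4 (R : realType) (d : measure_display) (T : measurableType d)
  (P : probability T R) (X X' : nat -> T -> R) (Y : T -> R)
  (mX : forall i, measurable_fun setT (X i))
  (mX' : forall i, measurable_fun setT (X' i))
  (mY : measurable_fun setT Y)
  (indep : mutually_independent P (fam3 X X' Y))
  (law : same_law_seq P X X')
  (k : nat) (k_ge1 : (1 <= k)%N) (lambda : R) (lambda_gt0 : 0 < lambda)
  (p : R)
  (prod_fin : (fun n : nat => (\prod_(k <= i < n)
        \int[P]_x (expR (lambda * (X' i x - X i x)))%:E)%E) @ \oo --> p%:E) :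
  (P [set x | exists j : nat,
        (
        Y x + \sum_(1 <= i < (k + j).+1) X i x <= \sum_(k <= i < (k + j).+1) X' i x)%R]
   <= p%:E * \int[P]_x (expR (- (lambda * (Y x + \sum_(1 <= i < k) X i x))))%:E)%E.
Proof.
by apply: final.
Qed.
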